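(* It is undecidable whether, for an arbitrary ranked alphabet $\Sigma$, computable strong bimonoid $B$, and bottom-up deterministic $(\Sigma,B)$-wta $\mathcal{A}$, there is a crisp-deterministic $(\Sigma,B)$-wta $\mathcal{B}$ such that $[\![\mathcal{B}]\!]^{\mathrm{init}}=[\![\mathcal{A}]\!]^{\mathrm{init}}$.
   Context: Ranked alphabet $\Sigma$ ($\Sigma^{(0)}\ne\emptyset$), trees $T_\Sigma$. A strong bimonoid $(B,\oplus,\otimes,\mathbb{0},\mathbb{1})$: commutative monoid $(B,\oplus,\mathbb{0})$, monoid $(B,\otimes,\mathbb{1})$, $\mathbb{0}\ne\mathbb{1}$, $\mathbb{0}$ multiplicatively absorbing, no distributivity; it is computable if $B$ is a recursive set and $\oplus,\otimes$ are computable. $(\Sigma,B)$-wta $\mathcal{A}=(Q,\delta,F)$: $Q$ finite nonempty, $\delta_k:Q^k\times\Sigma^{(k)}\times Q\to B$, $F:Q\to B$. $h_{\mathrm{V}(\mathcal{A})}:T_\Sigma\to B^Q$: $h_{\mathrm{V}(\mathcal{A})}(\sigma(\xi_1,\dots,\xi_k))_q=\bigoplus_{q_1,\dots,q_k}\big(\bigotimes_{i=1}^k h_{\mathrm{V}(\mathcal{A})}(\xi_i)_{q_i}\big)\otimes\delta_k(q_1\dots q_k,\sigma,q)$; $[\![\mathcal{A}]\!]^{\mathrm{init}}(\xi)=\bigoplus_q h_{\mathrm{V}(\mathcal{A})}(\xi)_q\otimes F_q$. Bottom-up deterministic: for all $k,\sigma,q_1,\dots,q_k$ at most one $q$ with $\delta_k(q_1\dots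 q_k,\sigma,q)\ne\mathbb{0}$. Crisp-deterministic: exactly one $q$ with $\delta_k(q_1\dots q_k,\sigma,q)=\mathbb{1}$ and all others $\mathbb{0}$. *)

(* Defs.v *)
From mathcomp Require Import all_boot.

Set Implicit Arguments.
Unset Strict Implicit.
Unset Printing Implicit Defensive.

Record ranked_alphabet := RankedAlphabet {
  sym : finType;
  rank : sym -> nat
}.

Definition has_nullary (S : ranked_alphabet) : Prop :=
  exists s : sym S, rank s = 0.

(* Trees over a set of labels; T_Sigma = the well-ranked ones. *)
Inductive tree (X : Type) : Type :=
  Node : X -> seq (tree X) -> tree X.

Fixpoint well_ranked (S : ranked_alphabet) (t : tree (sym S)) : bool :=
  match t with
  | Node s ch =>
      (size ch == rank s) &&
      (fix go (l : seq (tree (sym S))) : bool :=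
         match l with
         | [::] => true
         | x :: l' => well_ranked x && go l'
         end) ch
  end.

(* Strong bimonoid: (B,+,0) commutative monoid, (B,*,1) monoid,
   0 <> 1, 0 multiplicatively absorbing; no distributivity. *)
Record strong_bimonoid := StrongBimonoid {
  sb_car :> Type;
  sb_add : sb_car -> sb_car -> sb_car;
  sb_mul : sb_car -> sb_car -> sb_car;
  sb_zero : sb_car;
  sb_one : sb_car;
  sb_addA : forall x y z, sb_add x (sb_add y z) = sb_add (sb_add x y) z;
  sb_addC : forall x y, sb_add x y = sb_add y x;
  sb_add0r : forall x, sb_add sb_zero x = x;
  sb_mulA : forall x y z, sb_mul x (sb_mul y z) = sb_mul (sb_mul x y) z;
  sb_mul1r : forall x, sb_mul sb_one x = x;
  sb_mulr1 : forall x, sb_mul x sb_one = x;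
  sb_mul0r : forall x, sb_mul sb_zero x = sb_zero;
  sb_mulr0 : forall x, sb_mul x sb_zero = sb_zero;
  sb_zero_neq_one : sb_zero <> sb_one
}.

(* A (Sigma,B)-wta with finite state set Q:
   delta s t q = delta_k(t, s, q) for k = rank s, t a k-tuple of states. *)
Record wta (S : ranked_alphabet) (B : strong_bimonoid) (Q : finType) := Wta {
  delta : forall s : sym S, (rank s).-tuple Q -> Q -> B;
  final : Q -> B
}.
Arguments delta {S B Q} w s t q.
Arguments final {S B Q} w q.

Section Semantics.
Variables (S : ranked_alphabet) (B : strong_bimonoid) (Q : finType).
Variable (A : wta S B Q).

(* h_{V(A)} : the vector of state weights of a tree (meaningful on
   well-ranked trees). *)
Fixpoint hV (xi : tree (sym S)) : Q -> B :=
  match xi with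
  | Node s ch =>
      let hs := (fix go (l : seq (tree (sym S))) : seq (Q -> B) :=
                   match l with
                   | [::] => [::]
                   | x :: l' => hV x :: go l'
                   end) ch in
      fun q =>
        \big[@sb_add B / sb_zero B]_(t : (rank s).-tuple Q)
          sb_mul (\big[@sb_mul B / sb_one B]_(i < rank s)
                    (nth (fun _ => sb_zero B) hs i) (tnth t i))
                 (delta A s t q)
  end.

Definition sem_init (xi : tree (sym S)) : B :=
  \big[@sb_add B / sb_zero B]_(q : Q) sb_mul (hV xi q) (final A q).

Definition bu_deterministic : Prop :=
  forall (s : sym S) (t : (rank s).-tuple Q) (q1 q2 : Q),
    delta A s t q1 <> sb_zero B -> delta A s t q2 <> sb_zero B -> q1 = q2.

Definition crisp_deterministic : Prop :=
  forall (s : sym S) (t : (rank s).-tuple Q),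
    exists q : Q, delta A s t q = sb_one B /\
      (forall q' : Q, q' <> q -> delta A s t q' = sb_zero B).

End Semantics.

Definition has_crisp_equivalent (S : ranked_alphabet) (B : strong_bimonoid)
    (Q : finType) (A : wta S B Q) : Prop :=
  exists (Q' : finType) (A' : wta S B Q'),
    0 < #|Q'| /\ crisp_deterministic A' /\
    (forall xi : tree (sym S), well_ranked xi -> sem_init A' xi = sem_init A xi).

Inductive prog : Type :=
  | PZero : prog
  | PSucc : prog
  | PProj : nat -> prog
  | PComp : prog -> seq prog -> prog
  | PPrim : prog -> prog -> prog
  | PMu : prog -> prog.

Inductive eval : prog -> seq nat -> nat -> Prop :=
  | ev_zero v : eval PZero v 0
  | ev_succ x v : eval PSucc (x :: v) x.+1
  | ev_proj i v : eval (PProj i) v (nth 0 v i)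
  | ev_comp f gs v ws y :
      evals gs v ws -> eval f ws y -> eval (PComp f gs) v y
  | ev_prim0 f g v y : eval f v y -> eval (PPrim f g) (0 :: v) y
  | ev_primS f g n v r y :
      eval (PPrim f g) (n :: v) r -> eval g (n :: r :: v) y ->
      eval (PPrim f g) (n.+1 :: v) y
  | ev_mu f v n :
      eval f (n :: v) 0 ->
      (forall m, m < n -> exists k, eval f (m :: v) k.+1) ->
      eval (PMu f) v n
with evals : seq prog -> seq nat -> seq nat -> Prop :=
  | evs_nil v : evals [::] v [::]
  | evs_cons g gs v y ys :
      eval g v y -> evals gs v ys -> evals (g :: gs) v (y :: ys).

Definition npair (x y : nat) : nat := ((x + y) * (x + y).+1) %/ 2 + y.

Fixpoint enc_list (l : seq nat) : nat :=
  match l with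
  | [::] => 0
  | x :: l' => (npair x (enc_list l')).+1
  end.

Fixpoint pcode (p : prog) : nat :=
  match p with
  | PZero => npair 0 0
  | PSucc => npair 1 0
  | PProj i => npair 2 i
  | PComp f gs =>
      npair 3 (npair (pcode f)
        (enc_list ((fix go (l : seq prog) : seq nat :=
                      match l with
                      | [::] => [::]
                      | g :: l' => pcode g :: go l'
                      end) gs)))
  | PPrim f g => npair 4 (npair (pcode f) (pcode g))
  | PMu f => npair 5 (pcode f)
  end.

(* B is a computable strong bimonoid, presented through an injective
   numbering enc : B -> nat whose image is decided by pB, and with
   + and * computed (on codes) by pA and pM. *)
Definition presents (B : strong_bimonoid) (enc : B -> nat)
    (pB pA pM : prog) : Prop :=
  injective enc /\
  (forall x : nat, (exists b : B, enc b = x) -> eval pB [:: x] 1) /\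
  (forall x : nat, (forall b : B, enc b <> x) -> eval pB [:: x] 0) /\
  (forall a b : B, eval pA [:: enc a; enc b] (enc (sb_add a b))) /\
  (forall a b : B, eval pM [:: enc a; enc b] (enc (sb_mul a b))).

(* Encoding of an input instance (Sigma, B, A) as one natural number:
   ranks     : rank of the i-th symbol,
   pB,pA,pM  : programs presenting B; z0, z1 : codes of 0 and 1,
   table     : entries (symbol index, state indices q1..qk, state index q,
               code of delta_k(q1..qk, sigma, q)),
   finals    : code of F_q for the q-th state. *)
Definition entry_code (e : nat * seq nat * nat * nat) : nat :=
  let: (i, ts, q, w) := e in npair i (npair (enc_list ts) (npair q w)).

Definition instance_code (ranks : seq nat) (pB pA pM : prog) (z0 z1 : nat)
    (table : seq (nat * seq nat * nat * nat)) (finals : seq nat) : nat :=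
  enc_list [:: enc_list ranks; pcode pB; pcode pA; pcode pM; z0; z1;
               enc_list (map entry_code table); enc_list finals].

(* c is a code of the instance (Sigma, B presented by enc,pB,pA,pM, A),
   for some numbering of the symbols and of the states and some listing
   of the transition table. *)
Definition describes (c : nat) (S : ranked_alphabet) (B : strong_bimonoid)
    (Q : finType) (A : wta S B Q) (enc : B -> nat) (pB pA pM : prog) : Prop :=
  exists (iS : sym S -> nat) (iQ : Q -> nat) (ranks : seq nat)
         (table : seq (nat * seq nat * nat * nat)) (finals : seq nat),
    [/\ injective iS, (forall s, iS s < size ranks) & #|sym S| = size ranks] /\
    [/\ injective iQ, (forall q, iQ q < size finals) & #|Q| = size finals] /\
    (forall s : sym S, nth 0 ranks (iS s) = rank s) /\
    (forall q : Q, nth 0 finals (iQ q) = enc (final A q)) /\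
    (forall e, e \in table <->
       exists (s : sym S) (t : (rank s).-tuple Q) (q : Q),
         e = (iS s, map iQ t, iQ q, enc (delta A s t q))) /\
    c = instance_code ranks pB pA pM (enc (sb_zero B)) (enc (sb_one B))
          table finals.

Definition decides_crisp_determinizability (d : prog) : Prop :=
  forall (S : ranked_alphabet) (B : strong_bimonoid) (Q : finType)
         (A : wta S B Q) (enc : B -> nat) (pB pA pM : prog) (c : nat),
    has_nullary S -> 0 < #|Q| -> presents enc pB pA pM ->
    bu_deterministic A -> describes c A enc pB pA pM ->
    (has_crisp_equivalent A -> eval d [:: c] 1) /\
    (~ has_crisp_equivalent A -> eval d [:: c] 0).

(* Main.v *)
Require Import Defs.
From HB Require Import structures.
From mathcomp Require Import all_boot.
From mathcomp Require Import zify.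
Set Implicit Arguments.
Unset Strict Implicit.
Unset Printing Implicit Defensive.

Arguments npair : simpl never.

Fixpoint allP (P : prog -> Prop) (gs : seq prog) : Prop :=
  match gs with [::] => True | g :: gs' => P g /\ allP P gs' end.

Section ProgInd.
Variable P : prog -> Prop.
Hypothesis HZ : P PZero.
Hypothesis HS : P PSucc.
Hypothesis HP : forall i, P (PProj i).
Hypothesis HC : forall f gs, P f -> allP P gs -> P (PComp f gs).
Hypothesis HR : forall f g, P f -> P g -> P (PPrim f g).
Hypothesis HM : forall f, P f -> P (PMu f).
Fixpoint prog_ind' (p : prog) : P p :=
  match p with
  | PZero => HZ | PSucc => HS | PProj i => HP i
  | PComp f gs => HC (prog_ind' f)
      ((fix go (l : seq prog) : allP P l :=
         match l with [::] => I | g :: l' => conj (prog_ind' g) (go l') end) gs)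
  | PPrim f g => HR (prog_ind' f) (prog_ind' g)
  | PMu f => HM (prog_ind' f)
  end.
End ProgInd.


Lemma evalZ_inv v y : eval PZero v y -> y = 0.
Proof. by move=> H; inversion H. Qed.
Lemma evalS_inv v y : eval PSucc v y -> exists x v', v = x :: v' /\ y = x.+1.
Proof. by move=> H; inversion H; exists x, v0. Qed.
Lemma evalJ_inv i v y : eval (PProj i) v y -> y = nth 0 v i.
Proof. by move=> H; inversion H. Qed.
Lemma evalC_inv f gs v y : eval (PComp f gs) v y -> exists ws, evals gs v ws /\ eval f ws y.
Proof. by move=> H; inversion H; exists ws. Qed.
Lemma evalR_nil f g y : eval (PPrim f g) [::] y -> False.
Proof. by move=> H; inversion H. Qed.
Lemma evalR0_inv f g v y : eval (PPrim f g) (0 :: v) y -> eval f v y.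
Proof. by move=> H; inversion H. Qed.
Lemma evalRS_inv f g n v y : eval (PPrim f g) (n.+1 :: v) y ->
  exists r, eval (PPrim f g) (n :: v) r /\ eval g (n :: r :: v) y.
Proof. by move=> H; inversion H; exists r. Qed.
Lemma evalM_inv f v n : eval (PMu f) v n ->
  eval f (n :: v) 0 /\ (forall m, m < n -> exists k, eval f (m :: v) k.+1).
Proof. by move=> H; inversion H. Qed.
Lemma evals_nil_inv v ws : evals [::] v ws -> ws = [::].
Proof. by move=> H; inversion H. Qed.
Lemma evals_cons_inv g gs v ws : evals (g :: gs) v ws ->
  exists y ys, ws = y :: ys /\ eval g v y /\ evals gs v ys.
Proof. by move=> H; inversion H; exists y, ys. Qed.

Lemma eval_det p : forall v y1 y2, eval p v y1 -> eval p v y2 -> y1 = y2.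
Proof.
elim/prog_ind': p.
- by move=> v y1 y2 /evalZ_inv -> /evalZ_inv ->.
- by move=> v y1 y2 /evalS_inv [x [v' [-> ->]]] /evalS_inv [x' [v'' [[-> _] ->]]].
- by move=> i v y1 y2 /evalJ_inv -> /evalJ_inv ->.
- move=> f gs IHf IHgs v y1 y2 /evalC_inv [ws [E1 H1]] /evalC_inv [ws' [E2 H2]].
  suff E : ws = ws' by subst; exact: IHf H1 H2.
  elim: gs ws ws' IHgs E1 E2 {H1 H2} => [|g gs IH] ws ws' /= IHgs E1 E2.
    by rewrite (evals_nil_inv E1) (evals_nil_inv E2).
  case/evals_cons_inv: E1 => [y [ys [-> [Hy Hys]]]].
  case/evals_cons_inv: E2 => [y' [ys' [-> [Hy' Hys']]]].
  by rewrite (IHgs.1 _ _ _ Hy Hy') (IH _ _ IHgs.2 Hys Hys').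
- move=> f g IHf IHg [|k v] y1 y2; first by move/evalR_nil.
  elim: k y1 y2 => [|k IH] y1 y2.
    by move=> /evalR0_inv H1 /evalR0_inv H2; exact: IHf H1 H2.
  move=> /evalRS_inv [r [H1 H1']] /evalRS_inv [r' [H2 H2']].
  rewrite -(IH _ _ H1 H2) in H2'; exact: IHg H1' H2'.
- move=> f IHf v n1 n2 /evalM_inv [H1 H1'] /evalM_inv [H2 H2'].
  case: (ltngtP n1 n2) => // lt.
  + by case: (H2' _ lt) => k Hk; have := IHf _ _ _ H1 Hk.
  + by case: (H1' _ lt) => k Hk; have := IHf _ _ _ H2 Hk.
Qed.

Fixpoint constp (k : nat) : prog :=
  if k is k'.+1 then PComp PSucc [:: constp k'] else PZero.
Definition PredP := PPrim PZero (PProj 0).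
Definition AddP := PPrim (PProj 0) (PComp PSucc [:: PProj 1]).
Definition MinusP := PPrim (PProj 0) (PComp PredP [:: PProj 1]).
Definition ITE := PPrim (PProj 1) (PProj 2).
Definition IsZ := PPrim (constp 1) PZero.
Definition MulP := PPrim PZero (PComp AddP [:: PProj 1; PProj 2]).

Lemma ev1 f g v a y : eval g v a -> eval f [:: a] y -> eval (PComp f [:: g]) v y.
Proof. by move=> H1 H2; apply: ev_comp H2; do !constructor. Qed.
Lemma ev2 f g1 g2 v a1 a2 y : eval g1 v a1 -> eval g2 v a2 ->
  eval f [:: a1; a2] y -> eval (PComp f [:: g1; g2]) v y.
Proof. by move=> H1 H2 H; apply: ev_comp H; do !constructor. Qed.
Lemma ev3 f g1 g2 g3 v a1 a2 a3 y : eval g1 v a1 -> eval g2 v a2 -> eval g3 v a3 ->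
  eval f [:: a1; a2; a3] y -> eval (PComp f [:: g1; g2; g3]) v y.
Proof. by move=> H1 H2 H3 H; apply: ev_comp H; do !constructor. Qed.
Lemma evJ i v y : y = nth 0 v i -> eval (PProj i) v y.
Proof. by move=> ->; constructor. Qed.

Lemma eval_const k v : eval (constp k) v k.
Proof.
elim: k => [|k IH] /=; first by constructor.
by apply: ev1 IH _; constructor.
Qed.

Lemma eval_prim f g (F0 : seq nat -> nat) (G : nat -> nat -> seq nat -> nat) :
  (forall v, eval f v (F0 v)) -> (forall j r v, eval g (j :: r :: v) (G j r v)) ->
  forall k v, eval (PPrim f g) (k :: v)
    (nat_rect (fun _ => nat) (F0 v) (fun j r => G j r v) k).
Proof.
move=> Hf Hg; elim=> [|k IH] v /=; first by constructor.
by apply: ev_primS (IH v) _.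
Qed.

Lemma eval_Pred k v : eval PredP (k :: v) k.-1.
Proof.
have := @eval_prim PZero (PProj 0) (fun _ => 0) (fun j r v => j)
  (fun v => ev_zero v) (fun j r v => ev_proj 0 (j :: r :: v)) k v.
by case: k.
Qed.

Lemma eval_eq p v a b : eval p v a -> a = b -> eval p v b.
Proof. by move=> H <-. Qed.

Lemma eval_Add k y v : eval AddP (k :: y :: v) (k + y).
Proof.
have Hg : forall j r w, eval (PComp PSucc [:: PProj 1]) (j :: r :: w) r.+1.
  by move=> j r w; apply: ev1; [apply: evJ | constructor].
apply: eval_eq (eval_prim (G := fun j r w => r.+1) (fun v => ev_proj 0 v) Hg k (y :: v)) _.
by elim: k => //= k ->.
Qed.

Lemma eval_Sub b a v : eval MinusP (b :: a :: v) (a - b).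
Proof.
have Hg : forall j r w, eval (PComp PredP [:: PProj 1]) (j :: r :: w) r.-1.
  by move=> j r w; apply: ev1; [apply: evJ | apply: eval_Pred].
apply: eval_eq (eval_prim (G := fun j r w => r.-1) (fun v => ev_proj 0 v) Hg b (a :: v)) _.
by elim: b => [|b /= ->]; rewrite ?subn0 ?subnS.
Qed.

Lemma eval_ITE a x y v : eval ITE (a :: x :: y :: v) (if a is 0 then y else x).
Proof.
apply: eval_eq (eval_prim (G := fun j r w => nth 0 w 0) (fun v => ev_proj 1 v)
  (fun j r w => ev_proj 2 _) a (x :: y :: v)) _.
by case: a.
Qed.

Lemma eval_Mul k y v : eval MulP (k :: y :: v) (k * y).
Proof.
have Hg : forall j r w, eval (PComp AddP [:: PProj 1; PProj 2]) (j :: r :: w) (r + nth 0 w 0).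
  by move=> j r w; apply: ev2; [apply: evJ | apply: evJ | apply: eval_Add].
apply: eval_eq (eval_prim (F0 := fun _ => 0) (fun v => ev_zero v) Hg k (y :: v)) _.
by elim: k => //= k ->; rewrite mulSn addnC.
Qed.

Lemma eval_IsZ k v : eval IsZ (k :: v) (k == 0).
Proof.
have := @eval_prim (constp 1) PZero (fun _ => 1) (fun j r v => 0)
  (fun v => eval_const 1 v) (fun j r v => ev_zero _) k v.
by case: k.
Qed.

Definition projs (s m : nat) : seq prog := [seq PProj i | i <- iota s m].

Fixpoint prodp (cs : seq prog) : prog :=
  if cs is c :: cs' then PComp MulP [:: c; prodp cs'] else constp 1.

Definition G0 (L' : nat) (cg : prog) : prog :=
  PComp ITE [:: PProj 1;
     PComp cg (PProj 2 :: PProj 0 :: PComp PredP [:: PProj 1] :: projs 3 L');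
     PZero].

Definition StP (L : nat) (cf : prog) : prog :=
  let Rp := PComp cf (PProj 2 :: PProj 0 :: projs 3 L) in
  PComp ITE [:: PProj 1; PProj 1;
    PComp ITE [:: Rp;
       PComp ITE [:: PComp PredP [:: Rp]; PZero;
                     PComp PSucc [:: PComp PSucc [:: PProj 0]]];
       constp 1]].

Fixpoint clk (L : nat) (p : prog) : prog :=
  match p with
  | PZero => PComp PSucc [:: PZero]
  | PSucc => if L is 0 then PZero else PComp PSucc [:: PComp PSucc [:: PProj 1]]
  | PProj i => PComp PSucc [:: PProj i.+1]
  | PComp f gs =>
      PComp ITE [:: prodp (map (clk L) gs);
                    PComp (clk (size gs) f)
                      (PProj 0 :: map (fun g => PComp PredP [:: clk L g]) gs);
                    PZero]
  | PPrim f g =>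
      if L is L'.+1 then
        PComp (PPrim (clk L' f) (G0 L' (clk L'.+2 g))) (PProj 1 :: PProj 0 :: projs 2 L')
      else PZero
  | PMu f =>
      PComp PredP [:: PComp (PPrim PZero (StP L (clk L.+1 f))) (PProj 0 :: PProj 0 :: projs 1 L)]
  end.

Definition primF (b : nat) (st : nat -> nat -> nat) : nat -> nat :=
  fix go k := if k is j.+1 then (if go j is r.+1 then st j r else 0) else b.

Definition muS (h : nat -> nat) : nat -> nat :=
  fix go j := if j is i.+1 then
     (if go i is 0 then (match h i with 0 => 1 | 1 => i.+2 | _ => 0 end) else go i)
     else 0.

Fixpoint Fu (p : prog) (n : nat) (v : seq nat) : nat :=
  match p with
  | PZero => 1
  | PSucc => if v is x :: _ then x.+2 else 0
  | PProj i => (nth 0 v i).+1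
  | PComp f gs =>
      let rs := map (fun g => Fu g n v) gs in
      if all (fun r => 0 < r) rs then Fu f n (map predn rs) else 0
  | PPrim f g =>
      if v is k :: v' then primF (Fu f n v') (fun j r => Fu g n (j :: r :: v')) k else 0
  | PMu f => (muS (fun j => Fu f n (j :: v)) n).-1
  end.

Lemma evals_projs w : forall s u, size u = s -> evals (projs s (size w)) (u ++ w) w.
Proof.
elim: w => [|x w IH] s u Hu /=; first by constructor.
constructor; first by apply: evJ; rewrite nth_cat Hu ltnn subnn.
by rewrite -cat_rcons; apply: IH; rewrite size_rcons Hu.
Qed.

Lemma eval_prodp cs w rs : evals cs w rs -> eval (prodp cs) w (foldr muln 1 rs).
Proof.
elim: cs rs => [|c cs IH] rs /=.
  by move/evals_nil_inv => ->; apply: (eval_const 1).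
case/evals_cons_inv => [y [ys [-> [Hy Hys]]]] /=.
by apply: ev2 Hy (IH _ Hys) _; apply: eval_Mul.
Qed.

Lemma foldr_mul_gt0 rs : (0 < foldr muln 1 rs) = all (fun r => 0 < r) rs.
Proof. by elim: rs => //= r rs <-; rewrite muln_gt0. Qed.

Lemma clk_ok p : forall L n v, size v = L -> eval (clk L p) (n :: v) (Fu p n v).
Proof.
elim/prog_ind': p.
- by move=> L n v _ /=; apply: ev1; constructor.
- move=> [|L] n [|x v] //= _; first by constructor.
  by apply: ev1; [apply: ev1; [apply: evJ | constructor] | constructor].
- by move=> i L n v _ /=; apply: ev1; [apply: evJ | constructor].
- move=> f gs IHf IHgs L n v Hv /=.
  have Ers : evals (map (clk L) gs) (n :: v) (map (fun g => Fu g n v) gs).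
    elim: gs IHgs {IHf} => [|g gs IH] /= IHgs; first by constructor.
    by constructor; [apply: IHgs.1 | apply: IH; case: IHgs].
  have Erp : evals (PProj 0 :: map (fun g => PComp PredP [:: clk L g]) gs) (n :: v)
               (n :: map predn (map (fun g => Fu g n v) gs)).
    constructor; first by apply: evJ.
    elim: gs IHgs {IHf Ers} => [|g gs IH] /= IHgs; first by constructor.
    constructor; last by apply: IH; case: IHgs.
    by apply: ev1; [apply: IHgs.1 | apply: eval_Pred].
  apply: ev3; [exact: eval_prodp Ers | | constructor | ].
    apply: ev_comp Erp (IHf _ _ _ _); by rewrite !size_map.
  apply: eval_eq; first exact: eval_ITE.
  by rewrite -foldr_mul_gt0; case: (foldr muln 1 _).
- move=> f g IHf IHg [|L'] n v /=.
    by case: v => // _; constructor.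
  case: v => // k v' [Hv'].
  apply: (ev_comp (ws := k :: n :: v')).
    constructor; first by apply: evJ.
    constructor; first by apply: evJ.
    by rewrite -Hv'; apply: (evals_projs v' (u := [:: n; k])).
  elim: k => [|k IH] /=; first by constructor; apply: IHf.
  apply: ev_primS IH _.
  apply: ev3; [apply: evJ; reflexivity | | constructor | ].
    apply: (ev_comp (ws := [:: n, k, _ & v'])); last by apply: IHg; rewrite /= Hv'.
    constructor; first by apply: evJ.
    constructor; first by apply: evJ.
    constructor; first by apply: ev1; [apply: evJ | apply: eval_Pred].
    by rewrite -Hv'; apply: (evals_projs v' (u := [:: k; _; n])).
  apply: eval_eq; first exact: eval_ITE.
  by case: (primF _ _ k).
- move=> f IHf L n v Hv /=.
  apply: ev1; last by apply: eval_Pred.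
  apply: (ev_comp (ws := n :: n :: v)).
    constructor; first by apply: evJ.
    constructor; first by apply: evJ.
    by rewrite -Hv; apply: (evals_projs v (u := [:: n])).
  move: {1 4}n => m.
  elim: m => [|m IH] /=; first by constructor; constructor.
  apply: ev_primS IH _.
  set s := muS _ m.
  have HR : eval (PComp (clk L.+1 f) (PProj 2 :: PProj 0 :: projs 3 L)) [:: m, s, n & v]
              (Fu f n (m :: v)).
    apply: ev_comp; last by apply: IHf; rewrite /= Hv.
    constructor; first by apply: evJ.
    constructor; first by apply: evJ.
    by rewrite -Hv; apply: (evals_projs v (u := [:: m; s; n])).
  apply: ev3; [apply: evJ; reflexivity | apply: evJ; reflexivity | | ].
    apply: ev3; [exact: HR | | apply: (eval_const 1) | ].
      apply: ev3; [apply: ev1; [exact: HR | apply: eval_Pred] | constructor | | ].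
        by apply: ev1; [apply: ev1; [apply: evJ; reflexivity | constructor] | constructor].
      exact: eval_ITE.
    exact: eval_ITE.
  apply: eval_eq; first exact: eval_ITE.
  by clear HR; case: s => //=; case: (Fu f n (m :: v)) => [|[|r]].
Qed.

Lemma muS_spec h j :
  (muS h j = 0 -> forall i, i < j -> 1 < h i) /\
  (forall m, muS h j = m.+2 -> [/\ m < j, h m = 1 & forall i, i < m -> 1 < h i]).
Proof.
elim: j => [|j [IH0 IH2]] /=; first by split=> // m.
case E: (muS h j) => [|s].
  have Hi := IH0 E.
  case Eh: (h j) => [|[|r]]; split=> //.
  - by move=> m [<-]; split=> //; rewrite ltnSn.
  - by move=> _ i; rewrite ltnS leq_eqVlt => /orP [/eqP -> | /Hi]; rewrite ?Eh.
split=> // m Em; case: (IH2 m); rewrite ?E // => lt h1 hi.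
by split=> //; apply: ltnW.
Qed.

Lemma muS_zero h m : (forall i, i < m -> 1 < h i) -> forall j, j <= m -> muS h j = 0.
Proof.
move=> Hi; elim=> [|j IH] //= lt; rewrite IH ?(ltnW lt) //.
by case: (h j) (Hi _ lt) => [|[|r]].
Qed.

Lemma muS_found h m : (forall i, i < m -> 1 < h i) -> h m = 1 ->
  forall j, m < j -> muS h j = m.+2.
Proof.
move=> Hi Hm; elim=> [|j IH] //; rewrite ltnS leq_eqVlt => /orP [/eqP <- | lt] /=.
  by rewrite (muS_zero Hi (leqnn m)) Hm.
by rewrite IH.
Qed.

Lemma Fu_sound p : forall n v y, Fu p n v = y.+1 -> eval p v y.
Proof.
elim/prog_ind': p.
- by move=> n v y [<-]; constructor.
- by move=> n [|x v] y //= [<-]; constructor.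
- by move=> i n v y [<-]; constructor.
- move=> f gs IHf IHgs n v y /=.
  case: ifP => // Hall /IHf Hf; apply: ev_comp Hf.
  elim: gs IHgs Hall {IHf} => [|g gs IH] /= IHgs; first by constructor.
  case/andP=> Hg Hgs; constructor; last by apply: IH => //; case: IHgs.
  by apply: (IHgs.1 n); rewrite prednK.
- move=> f g IHf IHg n [|k v] y //=.
  elim: k y => [|k IH] y /=; first by move/IHf; constructor.
  case E: (primF _ _ k) => [|r] // /IHg Hg.
  by apply: ev_primS Hg; apply: IH.
- move=> f IHf n v y /= E.
  have E2 : muS (fun j => Fu f n (j :: v)) n = y.+2.
    by move: E; case: (muS _ n) => [|[|s]] //= ->.
  case: (muS_spec (fun j => Fu f n (j :: v)) n) => _ /(_ _ E2) [_ h1 hi].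
  constructor; first by apply: (IHf n).
  move=> m /hi; case E3: (Fu f n (m :: v)) => [|[|k]] // _.
  by exists k; apply: (IHf n).
Qed.

Lemma Fu_complete p : forall v y, eval p v y ->
  exists n0, forall n, n0 <= n -> Fu p n v = y.+1.
Proof.
elim/prog_ind': p.
- by move=> v y /evalZ_inv ->; exists 0.
- by move=> v y /evalS_inv [x [v' [-> ->]]]; exists 0.
- by move=> i v y /evalJ_inv ->; exists 0.
- move=> f gs IHf IHgs v y /evalC_inv [ws [Hws Hf]].
  have [N1 HN1] : exists N, forall n, N <= n ->
      map (fun g => Fu g n v) gs = map succn ws.
    elim: gs ws IHgs Hws {IHf Hf} => [|g gs IH] ws /= IHgs.
      by move/evals_nil_inv => ->; exists 0.
    case/evals_cons_inv => [y' [ys [-> [Hy Hys]]]].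
    case: (IHgs.1 _ _ Hy) => N1 H1; case: (IH _ IHgs.2 Hys) => N2 H2.
    exists (maxn N1 N2) => n; rewrite geq_max => /andP [l1 l2] /=.
    by rewrite H1 // H2.
  case: (IHf _ _ Hf) => N2 HN2.
  exists (maxn N1 N2) => n; rewrite geq_max => /andP [l1 l2] /=.
  rewrite HN1 //; have -> : all (fun r => 0 < r) (map succn ws).
    by clear; elim: ws => //= w ws ->.
  by rewrite -map_comp map_id_in ?HN2.
- move=> f g IHf IHg [|k v] y; first by move/evalR_nil.
  elim: k y => [|k IH] y.
    move/evalR0_inv/IHf => [N HN]; exists N => n /= /HN ->; done.
  case/evalRS_inv => [r [Hr Hg]].
  case: (IH _ Hr) => N1 H1; case: (IHg _ _ Hg) => N2 H2.
  exists (maxn N1 N2) => n; rewrite geq_max => /andP [l1 l2] /=.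
  by have /= -> := H1 _ l1; rewrite H2.
- move=> f IHf v m /evalM_inv [H0 Hlt].
  case: (IHf _ _ H0) => N0 HN0.
  have [N1 HN1] : exists N, forall n, N <= n -> forall i, i < m -> 1 < Fu f n (i :: v).
    elim: m Hlt {H0 HN0} => [|m IH] Hlt; first by exists 0.
    case: IH => [i lt|N HN]; first by apply: Hlt; apply: ltnW.
    case: (Hlt m (ltnSn m)) => k /IHf [N' HN'].
    exists (maxn N N') => n; rewrite geq_max => /andP [l1 l2] i.
    rewrite ltnS leq_eqVlt => /orP [/eqP -> | lt]; last by apply: HN.
    by rewrite HN'.
  exists (maxn (maxn N0 N1) m.+1) => n; rewrite !geq_max => /andP [/andP [l0 l1] l2] /=.
  by rewrite (muS_found (HN1 _ l1) (HN0 _ l0) l2).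
Qed.

Definition TriP := PPrim PZero (PComp AddP [:: PProj 1; PComp PSucc [:: PProj 0]]).
Fixpoint tri (s : nat) : nat := if s is s'.+1 then tri s' + s'.+1 else 0.

Lemma tri_eq s : tri s = (s * s.+1) %/ 2.
Proof.
suff E : tri s * 2 = s * s.+1 by rewrite -E mulnK.
elim: s => //= s IH; rewrite mulnDl IH; lia.
Qed.

Lemma eval_Tri s v : eval TriP (s :: v) (tri s).
Proof.
have Hg : forall j r w, eval (PComp AddP [:: PProj 1; PComp PSucc [:: PProj 0]]) (j :: r :: w) (r + j.+1).
  move=> j r w; apply: ev2; [apply: evJ; reflexivity | apply: ev1; [apply: evJ; reflexivity|constructor] | apply: eval_Add].
apply: eval_eq (eval_prim (F0 := fun _ => 0) (fun v => ev_zero v) Hg s v) _.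
by elim: s => //= s ->.
Qed.

Definition NPP := PComp AddP [:: PComp TriP [:: PComp AddP [:: PProj 0; PProj 1]]; PProj 1].

Lemma eval_NPP x y v : eval NPP (x :: y :: v) (npair x y).
Proof.
apply: (@eval_eq _ _ (tri (x + y) + y)); last by rewrite /npair tri_eq.
apply: ev2; [ | apply: evJ; reflexivity | apply: eval_Add].
by apply: ev1; [apply: ev2; [apply: evJ; reflexivity|apply: evJ; reflexivity|apply: eval_Add] | apply: eval_Tri].
Qed.

Definition PConstP := PPrim (constp (npair 0 0))
  (PComp NPP [:: constp 3; PComp NPP [:: constp (npair 1 0);
     PComp PSucc [:: PComp NPP [:: PProj 1; PZero]]]]).

Lemma eval_PConst k v : eval PConstP (k :: v) (pcode (constp k)).
Proof.
elim: k => [|k IH]; first by constructor; apply: eval_const.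
apply: ev_primS IH _.
apply: ev2; [apply: eval_const | | apply: eval_NPP].
apply: ev2; [apply: eval_const | | apply: eval_NPP].
apply: ev1; [ | constructor].
apply: ev2; [apply: evJ; reflexivity | constructor | apply: eval_NPP].
Qed.

Inductive aexp : Type :=
  | AX : aexp
  | AN : nat -> aexp
  | ANP : aexp -> aexp -> aexp
  | AS : aexp -> aexp
  | APC : aexp -> aexp.

Fixpoint aeval (x : nat) (a : aexp) : nat :=
  match a with
  | AX => x
  | AN k => k
  | ANP a b => npair (aeval x a) (aeval x b)
  | AS a => (aeval x a).+1
  | APC a => pcode (constp (aeval x a))
  end.

Fixpoint acomp (a : aexp) : prog :=
  match a with
  | AX => PProj 0
  | AN k => constp k
  | ANP a b => PComp NPP [:: acomp a; acomp b]
  | AS a => PComp PSucc [:: acomp a]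
  | APC a => PComp PConstP [:: acomp a]
  end.

Lemma eval_acomp a x w : eval (acomp a) (x :: w) (aeval x a).
Proof.
elim: a => /=.
- by apply: evJ.
- by move=> k; apply: eval_const.
- by move=> a IHa b IHb; apply: ev2 IHa IHb _; apply: eval_NPP.
- by move=> a IHa; apply: ev1 IHa _; constructor.
- by move=> a IHa; apply: ev1 IHa _; apply: eval_PConst.
Qed.

Fixpoint AEL (l : seq aexp) : aexp :=
  if l is a :: l' then AS (ANP a (AEL l')) else AN 0.

Lemma aeval_AEL x l : aeval x (AEL l) = enc_list (map (aeval x) l).
Proof. by elim: l => //= a l ->. Qed.

Section S.
Variable B : strong_bimonoid.
HB.instance Definition sbadd_law := Monoid.isComLaw.Build (sb_car B) (sb_zero B) (@sb_add B)
  (@sb_addA B) (@sb_addC B) (@sb_add0r B).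
Lemma big_single (T : finType) (F : T -> B) (t0 : T) :
  (forall t, t != t0 -> F t = sb_zero B) ->
  \big[@sb_add B/sb_zero B]_(t : T) F t = F t0.
Proof.
move=> H; rewrite (bigD1 t0) //= big1; first by rewrite sb_addC sb_add0r.
by move=> i; apply: H.
Qed.
End S.

Definition Sig : ranked_alphabet := @RankedAlphabet bool (fun b : bool => if b then 1 else 0).

Definition chain (n : nat) : tree (sym Sig) :=
  iter n (fun t => Node (true : sym Sig) [:: t]) (Node (false : sym Sig) [::]).

Lemma wr_chain : forall xi : tree (sym Sig), well_ranked xi -> exists n, xi = chain n.
Proof.
fix IH 1.
move=> [[] [|t [|t' ch]]] //=.
- rewrite andbT => /IH [n ->]; by exists n.+1.
- by exists 0.
Qed.

Lemma chain_wr n : well_ranked (chain n).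
Proof. by elim: n => //= n ->. Qed.

Definition ind (B : strong_bimonoid) (b : bool) : B := if b then sb_one B else sb_zero B.

Lemma hV_leaf B (Q : finType) (A : wta Sig B Q) q :
  hV A (chain 0) q = delta A (false : sym Sig) (nil_tuple Q) q.
Proof.
rewrite /= (big_single (t0 := (nil_tuple Q))); last by move=> t; rewrite tuple0 eqxx.
by rewrite big_ord0 sb_mul1r.
Qed.

Lemma hV_node B (Q : finType) (A : wta Sig B Q) n q :
  hV A (chain n.+1) q =
  \big[@sb_add B/sb_zero B]_(t : 1.-tuple Q)
     sb_mul (hV A (chain n) (tnth t ord0)) (delta A (true : sym Sig) t q).
Proof.
rewrite [LHS]/=; apply: eq_bigr => t _.
by rewrite big_ord_recl big_ord0 sb_mulr1.
Qed.

Definition tup1 (Q : Type) (x : Q) : 1.-tuple Q := @Tuple 1 Q [:: x] (erefl true).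

Lemma tnth_tup1 (Q : Type) (x : Q) i : tnth (tup1 x) i = x.
Proof. by rewrite (tnth_nth x) (ord1 i). Qed.

Lemma tuple1_eq (Q : finType) (t : 1.-tuple Q) : t = tup1 (tnth t ord0).
Proof. by apply: eq_from_tnth => i; rewrite (ord1 i) tnth_tup1. Qed.

Lemma hV_crisp B (Q : finType) (A : wta Sig B Q) : crisp_deterministic A ->
  forall n, exists r, forall q, hV A (chain n) q = ind B (q == r).
Proof.
move=> Hc; elim=> [|n [r IH]].
  case: (Hc (false : sym Sig) (nil_tuple Q)) => r [H1 H2]; exists r => q.
  rewrite hV_leaf /ind; case: eqP => [->|/H2] //.
case: (Hc (true : sym Sig) (tup1 r)) => r' [H1 H2]; exists r' => q.
rewrite hV_node (big_single (t0 := (tup1 r))).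
  rewrite IH /ind tnth_tup1 eqxx sb_mul1r; case: eqP => [->|/H2] //.
move=> t Ht; rewrite IH /ind; case: eqP => [E|_]; last by rewrite sb_mul0r.
by move: Ht; rewrite (tuple1_eq t) E eqxx.
Qed.

Lemma hV_det B (Q : finType) (A : wta Sig B Q) (r0 : Q) (nx : Q -> Q) :
  (forall t q, delta A (false : sym Sig) t q = ind B (q == r0)) ->
  (forall t q, delta A (true : sym Sig) t q = ind B (q == nx (tnth t ord0))) ->
  forall n q, hV A (chain n) q = ind B (q == iter n nx r0).
Proof.
move=> H0 H1; elim=> [|n IH] q; first by rewrite hV_leaf H0.
rewrite hV_node (big_single (t0 := (tup1 (iter n nx r0)))).
  by rewrite IH tnth_tup1 eqxx /ind sb_mul1r H1 tnth_tup1.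
move=> t Ht; rewrite IH /ind; case: eqP => [E|_]; last by rewrite sb_mul0r.
by move: Ht; rewrite (tuple1_eq t) E eqxx.
Qed.

Lemma sem_ind B (Q : finType) (A : wta Sig B Q) xi r :
  (forall q, hV A xi q = ind B (q == r)) -> sem_init A xi = final A r.
Proof.
move=> H; rewrite /sem_init (big_single (t0 := r)).
  by rewrite H eqxx sb_mul1r.
by move=> q /negbTE Hq; rewrite H Hq sb_mul0r.
Qed.

Definition capK (K : option nat) (s : nat) : nat :=
  if K is Some T then minn s T.+1 else s.
Definition okK (K : option nat) (x : nat) : bool := (x == 0) || (capK K x.-1 == x.-1).
Definition mulnK (K : option nat) (x y : nat) : nat :=
  if (x == 0) || (y == 0) then 0 else (capK K (x.-1 + y.-1)).+1.

Lemma capKK K s : capK K (capK K s) = capK K s.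
Proof. by case: K => //= T; lia. Qed.
Lemma capK_le K s : capK K s <= s.
Proof. by case: K => //= T; lia. Qed.

Lemma ok_max K x y : okK K x -> okK K y -> okK K (maxn x y).
Proof. by move=> Hx Hy; case: (leqP x y). Qed.
Lemma ok_mul K x y : okK K (mulnK K x y).
Proof. by rewrite /mulnK /okK; case: ifP => //= _; rewrite capKK. Qed.
Lemma mulnKA K x y z : mulnK K x (mulnK K y z) = mulnK K (mulnK K x y) z.
Proof.
rewrite /mulnK; case: x => [|x] //=; case: y => [|y] //=; case: z => [|z] //=.
by congr S; case: K => [T|] /=; lia.
Qed.
Lemma ok_1 K : okK K 1.
Proof. by rewrite /okK /= /capK; case: K. Qed.
Lemma ok_0 K : okK K 0.
Proof. by []. Qed.
Lemma ok_2 K : okK K 2.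
Proof. rewrite /okK /= /capK; case: K => // T; apply/eqP; lia. Qed.

Section BK.
Variable K : option nat.
Definition BKt := {x : nat | okK K x}.
Definition addB (x y : BKt) : BKt := exist _ (maxn (val x) (val y)) (ok_max (valP x) (valP y)).
Definition mulB (x y : BKt) : BKt := exist _ (mulnK K (val x) (val y)) (ok_mul K _ _).
Definition zeroB : BKt := exist _ 0 (ok_0 K).
Definition oneB : BKt := exist _ 1 (ok_1 K).
Definition bB : BKt := exist _ 2 (ok_2 K).

Lemma addBA : forall x y z, addB x (addB y z) = addB (addB x y) z.
Proof. by move=> x y z; apply: val_inj; rewrite /= maxnA. Qed.
Lemma addBC : forall x y, addB x y = addB y x.
Proof. by move=> x y; apply: val_inj; rewrite /= maxnC. Qed.
Lemma addB0 : forall x, addB zeroB x = x.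
Proof. by move=> x; apply: val_inj; rewrite /= max0n. Qed.
Lemma mulBA : forall x y z, mulB x (mulB y z) = mulB (mulB x y) z.
Proof. by move=> x y z; apply: val_inj; rewrite /= mulnKA. Qed.
Lemma mul1B : forall x, mulB oneB x = x.
Proof.
move=> [[|x] /= Hx]; apply: val_inj => //=.
by rewrite /mulnK /=; move: Hx; rewrite /okK /= => /eqP ->.
Qed.
Lemma mulB1 : forall x, mulB x oneB = x.
Proof.
move=> [[|x] /= Hx]; apply: val_inj => //=.
by rewrite /mulnK /= addn0; move: Hx; rewrite /okK /= => /eqP ->.
Qed.
Lemma mul0B : forall x, mulB zeroB x = zeroB.
Proof. by move=> x; apply: val_inj. Qed.
Lemma mulB0 : forall x, mulB x zeroB = zeroB.
Proof. by move=> x; apply: val_inj; rewrite /= /mulnK orbT. Qed.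
Lemma zeroB_one : zeroB <> oneB.
Proof. by move/(congr1 val). Qed.

Definition BK : strong_bimonoid :=
  @StrongBimonoid BKt addB mulB zeroB oneB addBA addBC addB0 mulBA mul1B mulB1 mul0B mulB0 zeroB_one.
End BK.

Section Inst.
Variable d : prog.

Definition XP := PComp (clk 1 d) [:: PProj 0; PProj 2].
Definition CntStep := PComp ITE [:: PComp MinusP [:: PProj 1; PProj 0]; PProj 1;
   PComp ITE [:: PComp PredP [:: XP]; PComp PSucc [:: PProj 1];
                 PComp ITE [:: XP; PProj 1; PComp PSucc [:: PProj 1]]]].
Definition CntP := PPrim PZero CntStep.
Definition CapP := PComp ITE [:: PProj 0;
   PComp PSucc [:: PComp CntP [:: PComp PredP [:: PProj 0]; PProj 1]]; PZero].
Definition CoreB := PComp ITE [:: PProj 1;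
   PComp IsZ [:: PComp MinusP [:: PComp CapP [:: PComp PredP [:: PProj 1]; PProj 0];
                                PComp PredP [:: PProj 1]]];
   constp 1].
Definition CoreA := PComp AddP [:: PProj 1; PComp MinusP [:: PProj 1; PProj 2]].
Definition CoreM := PComp ITE [:: PProj 1;
   PComp ITE [:: PProj 2;
     PComp PSucc [:: PComp CapP [:: PComp PredP [:: PComp PredP [:: PComp AddP [:: PProj 1; PProj 2]]];
                                    PProj 0]];
     PZero];
   PZero].

Definition cntf (h : nat -> nat) : nat -> nat :=
  fix go k := if k is j.+1 then
    (if j - go j is 0 then (if h j == 1 then go j else (go j).+1) else go j) else 0.
Definition capf (h : nat -> nat) (s : nat) : nat := if s is s'.+1 then (cntf h s').+1 else 0.

Lemma eval_Cnt k c w : eval CntP (k :: c :: w) (cntf (fun j => Fu d j [:: c]) k).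
Proof.
elim: k => [|k IH] /=; first by constructor; constructor.
apply: ev_primS IH _.
set r := cntf _ k.
have HX : eval XP [:: k, r, c & w] (Fu d k [:: c]).
  apply: ev2; [apply: evJ; reflexivity | apply: evJ; reflexivity | exact: clk_ok].
apply: ev3; [ | apply: evJ; reflexivity | | ].
- by apply: ev2; [apply: evJ; reflexivity | apply: evJ; reflexivity | apply: eval_Sub].
- apply: ev3; [apply: ev1 HX (eval_Pred _ _) | apply: ev1; [apply: evJ; reflexivity | constructor] | | ].
    apply: ev3; [exact: HX | apply: evJ; reflexivity | apply: ev1; [apply: evJ; reflexivity | constructor] | ].
    by apply: eval_ITE.
  by apply: eval_ITE.
apply: eval_eq; first by apply: eval_ITE.
clear HX; case: (k - r) => //=.
by case: (Fu d k [:: c]) => [|[|x]].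
Qed.

Lemma eval_Cap s c w : eval CapP (s :: c :: w) (capf (fun j => Fu d j [:: c]) s).
Proof.
apply: ev3; [apply: evJ; reflexivity | | constructor | ].
  apply: ev1; last by constructor.
  apply: ev2; [apply: ev1; [apply: evJ; reflexivity | apply: eval_Pred] | apply: evJ; reflexivity | ].
  by apply: eval_Cnt.
by apply: eval_eq; [apply: eval_ITE | case: s].
Qed.

Definition hc (c : nat) := fun j => Fu d j [:: c].

Lemma eval_CoreB c x w : eval CoreB [:: c, x & w]
  (if x is 0 then 1 else (x.-1 - capf (hc c) x.-1 == 0)).
Proof.
apply: ev3; [apply: evJ; reflexivity | | apply: eval_const | ].
  apply: ev1; last by apply: eval_IsZ.
  apply: ev2; last by apply: eval_Sub.
    apply: ev2; [apply: ev1; [apply: evJ; reflexivity | apply: eval_Pred] | apply: evJ; reflexivity | ].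
    by apply: eval_Cap.
  by apply: ev1; [apply: evJ; reflexivity | apply: eval_Pred].
by apply: eval_eq; [apply: eval_ITE | case: x].
Qed.

Lemma eval_CoreA c x y w : eval CoreA [:: c, x, y & w] (maxn x y).
Proof.
apply: ev2; [apply: evJ; reflexivity | | ].
  by apply: ev2; [apply: evJ; reflexivity | apply: evJ; reflexivity | apply: eval_Sub].
by apply: eval_eq; [apply: eval_Add | rewrite maxnE].
Qed.

Lemma eval_CoreM c x y w : eval CoreM [:: c, x, y & w]
  (if x is 0 then 0 else if y is 0 then 0 else (capf (hc c) (x + y).-2).+1).
Proof.
apply: ev3; [apply: evJ; reflexivity | | constructor | ]; last first.
  by apply: eval_eq; [apply: eval_ITE | case: x].
apply: ev3; [apply: evJ; reflexivity | | constructor | ]; last first.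
  by apply: eval_eq; [apply: eval_ITE | case: y].
apply: ev1; last by constructor.
apply: ev2; [ | apply: evJ; reflexivity | apply: eval_Cap].
apply: ev1; last by apply: eval_Pred.
apply: ev1; last by apply: eval_Pred.
by apply: ev2; [apply: evJ; reflexivity | apply: evJ; reflexivity | apply: eval_Add].
Qed.

End Inst.

Definition tbl : seq (nat * seq nat * nat * nat) := [:: (0, [::], 0, 1); (1, [:: 0], 0, 2)].

Definition pX (E : prog) (x : nat) (Core : prog) : prog :=
  PComp Core [:: PComp E [:: constp x]; PProj 0; PProj 1].

Definition PCX (k : nat) : aexp :=
  ANP (AN 3) (ANP (AN k) (AEL [:: ANP (AN 3) (ANP AX (AEL [:: APC AX]));
                              AN (pcode (PProj 0)); AN (pcode (PProj 1))])).

Lemma aeval_PCX E Core : aeval (pcode E) (PCX (pcode Core)) = pcode (pX E (pcode E) Core).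
Proof. by []. Qed.

Section Inst2.
Variable d : prog.

Definition Cexp : aexp :=
  AEL [:: AN (enc_list [:: 0; 1]); PCX (pcode (CoreB d)); PCX (pcode CoreA); PCX (pcode (CoreM d));
          AN 0; AN 1; AN (enc_list (map entry_code tbl)); AN (enc_list [:: 1])].
Definition Phi := acomp Cexp.
Definition ecode := pcode Phi.
Definition pBd := pX Phi ecode (CoreB d).
Definition pAd := pX Phi ecode CoreA.
Definition pMd := pX Phi ecode (CoreM d).
Definition cstar := instance_code [:: 0; 1] pBd pAd pMd 0 1 tbl [:: 1].

Lemma aeval_Cexp E : aeval (pcode E) Cexp =
  instance_code [:: 0; 1] (pX E (pcode E) (CoreB d)) (pX E (pcode E) CoreA)
    (pX E (pcode E) (CoreM d)) 0 1 tbl [:: 1].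
Proof. by rewrite /Cexp aeval_AEL. Qed.

Lemma eval_self w : eval (PComp Phi [:: constp ecode]) w cstar.
Proof.
apply: ev1 (eval_const _ _) _.
apply: eval_eq (eval_acomp Cexp ecode [::]) _.
exact: aeval_Cexp.
Qed.

End Inst2.

Lemma cntf_none h : (forall j, h j != 1) -> forall k, cntf h k = k.
Proof. by move=> H; elim=> //= k ->; rewrite subnn (negbTE (H k)). Qed.

Lemma cntf_some h T : (forall j, j < T -> h j != 1) -> h T = 1 ->
  forall k, cntf h k = minn k T.
Proof.
move=> H HT; elim=> [|k IH] /=; first by rewrite min0n.
rewrite IH; have [lt|gt|eq] := ltngtP k T.
- by rewrite subnn (negbTE (H k lt)); lia.
- have -> : k - T = (k - T).-1.+1 by lia.
  lia.
- subst k; rewrite subnn HT eqxx; lia.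
Qed.

Lemma okK_val K x :
  ((if x is 0 then 1 else (x.-1 - capK K x.-1 == 0)) : nat) = okK K x.
Proof.
case: x => // x; rewrite /okK /=; have := capK_le K x.
by rewrite subn_eq0 => le; rewrite eqn_leq le.
Qed.

Definition AK (K : option nat) : wta Sig (BK K) unit :=
  @Wta Sig (BK K) unit (fun s t q => if s then bB K else oneB K) (fun _ => oneB K).

Lemma capK_S K n : capK K ((capK K n).+1) = capK K n.+1.
Proof. by case: K => [T|] //=; lia. Qed.

Lemma hV_AK K n : val (hV (AK K) (chain n) tt) = (capK K n).+1.
Proof.
elim: n => [|n IH]; first by rewrite hV_leaf /=; case: K.
rewrite hV_node (big_single (t0 := tup1 tt)); last first.
  by move=> t; rewrite (tuple1_eq t); case: (tnth t ord0); rewrite eqxx.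
by rewrite tnth_tup1 /= IH /mulnK /= addn1 capK_S.
Qed.

Lemma sem_AK K n : val (sem_init (AK K) (chain n)) = (capK K n).+1.
Proof.
rewrite /sem_init (big_single (t0 := tt)) //=.
by rewrite /mulnK /= addn0 -/(val _) hV_AK capKK.
Qed.

Section Main.
Variable d : prog.
Variable K : option nat.
Hypothesis Hcap : forall s, capf (hc d (cstar d)) s = capK K s.

Lemma presents_K : presents (B := BK K) val (pBd d) (pAd d) (pMd d).
Proof.
have HB : forall x, eval (pBd d) [:: x] (okK K x).
  move=> x; apply: ev3; [exact: eval_self | apply: evJ; reflexivity | apply: evJ; reflexivity | ].
  by apply: eval_eq; [apply: (eval_CoreB d (cstar d) x _) | rewrite Hcap okK_val].
split; first exact: val_inj.
split.
  by move=> x [b <-]; have := HB (val b); rewrite (valP b).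
split.
  move=> x Hx; have := HB x; case E: (okK K x) => //.
  by case: (Hx (exist _ x E)).
split.
  move=> a b; apply: ev3; [exact: eval_self | apply: evJ; reflexivity | apply: evJ; reflexivity | ].
  exact: (eval_CoreA (cstar d) (val a) (val b) [::]).
move=> a b; apply: ev3; [exact: eval_self | apply: evJ; reflexivity | apply: evJ; reflexivity | ].
apply: eval_eq; first exact: (eval_CoreM d (cstar d) (val a) (val b) [::]).
rewrite /= /mulnK; case: (val a) => [|x] //; case: (val b) => [|y] //=.
by rewrite Hcap addnS.
Qed.

Lemma describes_K : describes (cstar d) (AK K) val (pBd d) (pAd d) (pMd d).
Proof.
exists (fun s : bool => nat_of_bool s), (fun _ : unit => 0), [:: 0; 1], tbl, [:: 1].
split.
  split; first by case=> [] [].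
    by case.
  by rewrite card_bool.
split.
  split; first by case=> [] [].
    by case.
  by rewrite card_unit.
split; first by case.
split; first by case.
split; last by [].
move=> e; split.
  rewrite !inE => /orP [/eqP -> | /eqP ->].
    by exists (false : sym Sig), (nil_tuple unit), tt.
  by exists (true : sym Sig), (tup1 tt), tt.
move=> [[] [t [q ->]]].
  rewrite (tuple1_eq t); case: (tnth t ord0); case: q.
  by rewrite /= !inE eqxx orbT.
have -> : t = nil_tuple unit :> seq unit by rewrite (tuple0 t).
by case: q; rewrite /= !inE eqxx.
Qed.
End Main.

From Stdlib Require Import Classical IndefiniteDescription.

Section CaseA.
Variable T : nat.
Let K := Some T.
Definition Qa := 'I_(T.+2).
Definition nxa (i : Qa) : Qa := inord (minn i.+1 T.+1).
Definition deltaA (s : sym Sig) : (rank s).-tuple Qa -> Qa -> BK K :=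
  match s as b return (@rank Sig b).-tuple Qa -> Qa -> BK K with
  | true => fun t q => ind (BK K) (q == nxa (tnth t ord0))
  | false => fun t q => ind (BK K) (q == ord0)
  end.
Definition finalA (q : Qa) : BK K := insubd (zeroB K) (val q).+1.
Definition Acr : wta Sig (BK K) Qa := @Wta Sig (BK K) Qa deltaA finalA.

Lemma iter_nxa n : val (iter n nxa ord0) = minn n T.+1.
Proof.
elim: n => [|n IH] /=; first by rewrite min0n.
rewrite /nxa inordK IH; lia.
Qed.

Lemma crisp_Acr : crisp_deterministic Acr.
Proof.
move=> s; case: s => t.
  exists (nxa (tnth t ord0)); split; first by rewrite /= /ind ifT //; exact/eqP.
  by move=> q /eqP /negbTE; rewrite /= /ind => ->.
exists ord0; split; first by rewrite /=.
by move=> q /eqP /negbTE; rewrite /= /ind => ->.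
Qed.

Lemma has_crisp_A : has_crisp_equivalent (AK K).
Proof.
exists _, Acr; split; first by rewrite card_ord.
split; first exact: crisp_Acr.
move=> xi /wr_chain [n ->].
rewrite (@sem_ind _ _ Acr _ (iter n nxa ord0)); last first.
  by apply: hV_det.
apply: val_inj; rewrite sem_AK /finalA val_insubd iter_nxa /okK /=.
by rewrite ifT //; apply/eqP; lia.
Qed.
End CaseA.

Lemma no_crisp_B : ~ has_crisp_equivalent (AK None).
Proof.
move=> [Q' [A' [_ [Hc Heq]]]].
pose f (n : nat) : Q' := proj1_sig (constructive_indefinite_description _ (hV_crisp Hc n)).
have Hf n : sem_init A' (chain n) = final A' (f n).
  apply: sem_ind; rewrite /f; case: constructive_indefinite_description => //.
pose g (i : 'I_(#|Q'|.+1)) : Q' := f i.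
have inj_g : injective g.
  move=> i j Eij; apply: val_inj.
  have := congr1 val (Heq _ (chain_wr i)); have := congr1 val (Heq _ (chain_wr j)).
  rewrite !Hf; move: Eij; rewrite /g => -> ->; rewrite !sem_AK /=.
  by case.
by have := leq_card g inj_g; rewrite card_ord ltnn.
Qed.

Theorem theorem8p5 : ~ exists d : prog, decides_crisp_determinizability d.
Proof.
move=> [d Hd].
have Hnul : has_nullary Sig by exists (false : sym Sig).
have HQ : 0 < #|{: unit}| by rewrite card_unit.
have Hbu : forall K, bu_deterministic (AK K) by move=> K s t [] [].
case: (classic (exists T, Fu d T [:: cstar d] = 1)) => [Hex | Hnex].
- have Hex' : exists T, Fu d T [:: cstar d] == 1 by case: Hex => T /eqP; exists T.
  case: (ex_minnP Hex') => T /eqP HT Hmin.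
  have Hcap : forall s, capf (hc d (cstar d)) s = capK (Some T) s.
    have Hlt : forall j, j < T -> hc d (cstar d) j != 1.
      by move=> j lt; apply/negP => /Hmin; rewrite leqNgt lt.
    case=> [|s] //=; rewrite (cntf_some Hlt HT) /=; lia.
  case: (Hd Sig (BK (Some T)) _ (AK (Some T)) val (pBd d) (pAd d) (pMd d) (cstar d)
           Hnul HQ (presents_K Hcap) (Hbu _) (describes_K d (Some T))) => H1 _.
  have E1 := H1 (has_crisp_A T).
  have E0 := Fu_sound HT.
  by have := eval_det E1 E0.
- have Hcap : forall s, capf (hc d (cstar d)) s = capK None s.
    case=> [|s] //=; rewrite cntf_none // => j; apply/eqP => Ej.
    by apply: Hnex; exists j.
  case: (Hd Sig (BK None) _ (AK None) val (pBd d) (pAd d) (pMd d) (cstar d)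
           Hnul HQ (presents_K Hcap) (Hbu _) (describes_K d None)) => _ H0.
  case: (Fu_complete (H0 no_crisp_B)) => n0 Hn0.
  by apply: Hnex; exists n0; apply: Hn0.
Qed.
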